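(* Let $n>2$ and let $\mathcal{L}\subseteq\mathcal{L}_n$ be a linear subspace that is a Jordan algebra and is invariant under the conjugation action of $S_n$, and suppose $\mathcal{L}$ contains $J$ and contains at least one $S_n$-submodule isomorphic to $\{n-1,1\}$. Then exactly one of the following holds: (1) $\mathrm{EI}_n\subseteq\mathcal{L}$ and $\mathrm{Symm}_n\not\subseteq\mathcal{L}$; (2) $\mathrm{Symm}_n\subseteq\mathcal{L}$ and $\mathrm{EI}_n\not\subseteq\mathcal{L}$; (3) $\mathrm{EI}_n+\mathrm{Symm}_n\subseteq\mathcal{L}$.
   Context: $\mathbf{1}\in\mathbb{R}^n$ is the all-ones column vector; $\mathcal{L}_n=\{Q\in \mathrm{Mat}_n(\mathbb{R}): Q\mathbf{1}=0\}$; $J:=\frac1n\mathbf{1}\mathbf{1}^T-I_n$. $R_i\in\mathcal{L}_n$ has off-diagonal entries in column $i$ equal to $1$, other off-diagonal entries $0$, diagonal fixed by zero row sums; $\mathrm{EI}_n:=\operatorname{span}_{\mathbb{R}}(R_1,\dots,R_n)$. $\mathrm{Symm}_n$ is the space of symmetric matrices in $\mathcal{L}_n$ (equivalently $\operatorname{span}_{\mathbb{R}}(L_{ij}+L_{ji}: i\ne j)$, where $L_{ij}$ has $1$ at $(i,j)$, $-1$ at $(i,i)$, zeros elsewhere). For $\sigma\in S_n$, $K_\sigma$ is the permutation matrix with $e_iK_\sigma=e_{\sigma(i)}$, and $S_n$ acts by $\sigma\cdot X=K_\sigma^TXK_\sigma$. $\{n-1,1\}$ is the irreducible real $S_n$-module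 labelled by the partition $(n-1,1)$ (the standard representation). A Jordan algebra is a subspace closed under $AB+BA$. *)

(* Defs.v *)
From HB Require Import structures.
From mathcomp Require Import all_boot all_order all_algebra all_fingroup.
From mathcomp Require Import reals.
Set Implicit Arguments. Unset Strict Implicit. Unset Printing Implicit Defensive.
Import Order.TTheory GRing.Theory Num.Theory.
Local Open Scope ring_scope.

Section Defs.
Variable R : realType.
Variable n : nat.

Definition ones : 'cV[R]_n := const_mx 1.

Definition inLn (Q : 'M[R]_n) : Prop := Q *m ones = 0.

Definition Jmx : 'M[R]_n := \matrix_(i, j) ((n%:R)^-1 - (i == j)%:R).

(* keep the off-diagonal entries of M, fix the diagonal by zero row sums *)
Definition zrs (M : 'M[R]_n) : 'M[R]_n :=
  \matrix_(k, j) (if k == j then - \sum_(l < n | l != k) M k l else M k j).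

Definition Rmx (i : 'I_n) : 'M[R]_n := zrs (\matrix_(k, j) (j == i)%:R).

Definition Lmx (i j : 'I_n) : 'M[R]_n := zrs (delta_mx i j).

Definition EI : {vspace 'M[R]_n} := <<[seq Rmx i | i <- enum 'I_n]>>%VS.

Definition Symm : {vspace 'M[R]_n} :=
  <<[seq (Lmx p.1 p.2 + Lmx p.2 p.1)%R
      | p <- [seq (i, j) | i <- enum 'I_n, j <- enum 'I_n] & p.1 != p.2]>>%VS.

(* permutation matrix K_s : e_i K_s = e_{s i}; perm_mx s i j = (s i == j) *)
Definition Kmx (s : 'S_n) : 'M[R]_n := perm_mx s.

Definition act (s : 'S_n) (X : 'M[R]_n) : 'M[R]_n := (Kmx s)^T *m X *m Kmx s.

(* the standard module {n-1,1}: sum-zero row vectors, s . v = v K_s *)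
Definition in_std (v : 'rV[R]_n) : Prop := \sum_i v 0 i = 0.
Definition act_std (s : 'S_n) (v : 'rV[R]_n) : 'rV[R]_n := v *m Kmx s.

Definition Sn_invariant (W : {vspace 'M[R]_n}) : Prop :=
  forall (s : 'S_n) X, X \in W -> act s X \in W.

Definition jordan (W : {vspace 'M[R]_n}) : Prop :=
  forall A B, A \in W -> B \in W -> A *m B + B *m A \in W.

Definition iso_std (W : {vspace 'M[R]_n}) : Prop :=
  Sn_invariant W /\
  exists f : {linear 'M[R]_n -> 'rV[R]_n},
    [/\ (forall X, X \in W -> f X = 0 -> X = 0),
        (forall v, in_std v <-> exists2 X, X \in W & f X = v) &
        (forall s X, X \in W -> f (act s X) = act_std s (f X))].

End Defs.

(* Main.v *)
Require Import Defs.
From HB Require Import structures.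
From mathcomp Require Import all_boot all_order all_algebra all_fingroup.
From mathcomp Require Import reals.
From mathcomp Require Import ring lra.
Set Implicit Arguments. Unset Strict Implicit. Unset Printing Implicit Defensive.
Import Order.TTheory GRing.Theory Num.Theory.
Local Open Scope ring_scope.

Section Proof.
Variable R : realType.
Variable m : nat.
Local Notation n := m.+3.
Local Notation M := 'M[R]_n.

Lemma sumc (x : R) : \sum_(l < n) x = x * n%:R.
Proof. by rewrite sumr_const card_ord mulr_natr. Qed.

Lemma sum_ind (k : 'I_n) (g : 'I_n -> R) : \sum_l (l == k)%:R * g l = g k.
Proof.
rewrite (bigD1 k) //= eqxx mul1r big1 ?addr0 // => l /negbTE ->; by rewrite mul0r.
Qed.

Lemma sum_if1 (k : 'I_n) (x y : R) :
  \sum_l (if l == k then x else y) = x + y * (n%:R - 1).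
Proof.
transitivity (\sum_l ((l == k)%:R * (x - y) + y)).
  by apply: eq_bigr => l _; case: (l == k); rewrite ?mul1r ?mul0r; ring.
by rewrite big_split /= sum_ind sumc; ring.
Qed.

Lemma actE (s : 'S_n) (X : M) i j : Defs.act s X i j = X (s^-1 i)%g (s^-1 j)%g.
Proof.
rewrite /Defs.act /Kmx tr_perm_mx -row_permE.
have -> : perm_mx s = perm_mx (s^-1)^-1 :> M by rewrite invgK.
by rewrite -col_permE !mxE.
Qed.


Lemma sum_if2 (k1 k2 : 'I_n) (x y z : R) : k1 != k2 ->
  \sum_l (if l == k1 then x else if l == k2 then y else z)
   = x + y + z * (n%:R - 2).
Proof.
move=> hk.
transitivity (\sum_l ((l == k1)%:R * (x - z) + ((l == k2)%:R * (y - z) + z))).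
  apply: eq_bigr => l _; case: (eqVneq l k1) => [->|_].
    by rewrite (negbTE hk) /=; ring.
  by case: (l == k2); rewrite /=; ring.
by rewrite !big_split /= !sum_ind sumc; ring.
Qed.

Lemma sum_at (k : 'I_n) (h : 'I_n -> R) :
  (forall l, l != k -> h l = 0) -> \sum_l h l = h k.
Proof. by move=> H; rewrite (bigD1 k) //= big1 ?addr0. Qed.

Lemma sum_ne (a k : 'I_n) (x : R) :
  \sum_(l < n | l != a) (l == k)%:R * x = (1 - (a == k)%:R) * x.
Proof.
have := sum_ind k (fun _ => x); rewrite (bigD1 a) //= => H.
apply: (addrI ((a == k)%:R * x)); rewrite H; ring.
Qed.

Lemma andbR (b1 b2 : bool) : (b1 && b2)%:R = b1%:R * b2%:R :> R.
Proof. by case: b1; case: b2; rewrite /= ?mul1r ?mul0r. Qed.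

Lemma tperm0 (x k b : 'I_n) : (tperm x k b == x) = (b == k).
Proof. by rewrite -[X in _ == X](tpermR x k) (inj_eq perm_inj). Qed.

Definition CI (k : 'I_n) : M := \matrix_(a, b) (a == k)%:R.
Definition CJ (k : 'I_n) : M := \matrix_(a, b) (b == k)%:R.
Definition D (k : 'I_n) : M := delta_mx k k.
Definition Smat k : M := CI k + CJ k - 1%:M - n%:R *: D k.

Ltac ent k := apply/matrixP=> a b; rewrite !mxE (@sum_at k);
   [ rewrite !mxE ?eqxx /= | move=> l; rewrite !mxE => /negbTE ->; rewrite /= ?mul0r ?mulr0 ?andbF //].

Section P.
Variables i j : 'I_n.
Hypothesis ij : i != j.
Lemma P1 : CI i *m CI j = CI i. Proof. by ent j; rewrite ?(negbTE ij) /= ?andbT ?andbF ?andbR; ring. Qed.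
Lemma P2 : CI i *m CJ j = n%:R *: delta_mx i j.
Proof.
apply/matrixP=> a b; rewrite !mxE.
under eq_bigr do rewrite !mxE.
by rewrite sumc andbR; ring.
Qed.
Lemma P3 : CI i *m D j = delta_mx i j. Proof. by ent j; rewrite ?(negbTE ij) /= ?andbT ?andbF ?andbR; ring. Qed.
Lemma P4 : CJ i *m CI j = 0. Proof. by ent i; rewrite ?(negbTE ij) /= ?andbT ?andbF ?andbR; ring. Qed.
Lemma P5 : CJ i *m CJ j = CJ j. Proof. by ent i; rewrite ?(negbTE ij) /= ?andbT ?andbF ?andbR; ring. Qed.
Lemma P6 : CJ i *m D j = 0. Proof. by ent i; rewrite ?(negbTE ij) /= ?andbT ?andbF ?andbR; ring. Qed.
Lemma P7 : D i *m CI j = 0. Proof. by ent i; rewrite ?(negbTE ij) /= ?andbT ?andbF ?andbR; ring. Qed.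
Lemma P8 : D i *m CJ j = delta_mx i j. Proof. by ent i; rewrite ?(negbTE ij) /= ?andbT ?andbF ?andbR; ring. Qed.
Lemma P9 : D i *m D j = 0.
Proof. by rewrite /D mul_delta_mx_cond (negbTE ij) mulr0n. Qed.
End P.


Lemma Sjor i j : i != j ->
  Smat i *m Smat j + Smat j *m Smat i + Smat i + Smat j
  = n%:R *: (D i + D j - delta_mx i j - delta_mx j i).
Proof.
move=> ij; have ji : j != i by rewrite eq_sym.
rewrite /Smat !(mulmxDl, mulmxDr, mulmxN, mulNmx, mul1mx, mulmx1).
rewrite -?scalemxAl -?scalemxAr -?scalemxAl.
rewrite (P1 i j) (P2 i j) (P3 i j) (P4 ij) (P5 i j) (P6 ij) (P7 ij) (P8 i j) (P9 ij).
rewrite (P1 j i) (P2 j i) (P3 j i) (P4 ji) (P5 j i) (P6 ji) (P7 ji) (P8 j i) (P9 ji).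
apply/matrixP=> a b; rewrite !mxE; ring.
Qed.


Lemma natrT : true%:R = 1 :> R. Proof. by []. Qed.
Lemma natrF : false%:R = 0 :> R. Proof. by []. Qed.

Lemma LmxE i j : i != j -> Lmx R i j = delta_mx i j - D i.
Proof.
move=> ij; apply/matrixP=> a b; rewrite /Lmx /zrs !mxE.
case: (eqVneq a b) => [<-|ab].
  under eq_bigr do rewrite mxE andbR mulrC.
  rewrite sum_ne !andbR; case: (a == i); case: (a == j); rewrite /=; ring.
rewrite !andbR; case: (eqVneq a i) => [ai|nai]; last by rewrite /=; ring.
by rewrite -ai (eq_sym b a) (negbTE ab) /=; ring.
Qed.

Lemma RmxE k : Rmx R k = CJ k - 1%:M.
Proof.
apply/matrixP=> a b; rewrite /Rmx /zrs !mxE.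
case: (eqVneq a b) => [<-|ab].
  under eq_bigr do rewrite mxE -[(_ == k)%:R]mulr1.
  by rewrite sum_ne natrT; ring.
by rewrite natrF; ring.
Qed.

Lemma SmatE (o k : 'I_n) : Defs.act (tperm o k) (Smat o) = Smat k.
Proof.
apply/matrixP=> a b; rewrite actE tpermV /Smat !mxE !tperm0 (inj_eq perm_inj).
done.
Qed.


Lemma actstdE (s : 'S_n) (v : 'rV[R]_n) x y : act_std s v x y = v x (s^-1 y)%g.
Proof.
rewrite /act_std /Kmx.
have -> : perm_mx s = perm_mx (s^-1)^-1 :> M by rewrite invgK.
by rewrite -col_permE mxE.
Qed.

Definition o0 : 'I_n := ord0.
Definition o1 : 'I_n := @Ordinal n 1 isT.
Definition o2 : 'I_n := @Ordinal n 2 isT.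

Lemma key (L W : {vspace M}) (f : {linear M -> 'rV[R]_n}) :
  (forall Q, Q \in L -> inLn Q) -> jordan L -> Sn_invariant L -> Jmx R n \in L ->
  (W <= L)%VS -> Sn_invariant W ->
  (forall X, X \in W -> f X = 0 -> X = 0) ->
  (forall v, in_std v <-> exists2 X, X \in W & f X = v) ->
  (forall s X, X \in W -> f (Defs.act s X) = act_std s (f X)) ->
  (EI R n <= L)%VS \/ (Symm R n <= L)%VS.
Proof.
move=> hLn jor inv hJ WL Winv finj fsurj feqv.
have h10 : o1 != o0 by [].
have h20 : o2 != o0 by [].
have h21 : o2 != o1 by [].
have n0 : n%:R != 0 :> R by rewrite pnatr_eq0.
have n0' : (3 + m%:R : R) != 0.
  by rewrite (_ : 3 + m%:R = n%:R :> R) //; ring.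
have n2' : (3 + m%:R - 2 : R) != 0.
  by rewrite (_ : 3 + m%:R - 2 = m.+1%:R :> R) ?pnatr_eq0 //; ring.
have n1 : n%:R - 1 != 0 :> R.
  by rewrite (_ : n%:R - 1 = m.+2%:R) ?pnatr_eq0 //; ring.
have n2 : n%:R - 2 != 0 :> R.
  by rewrite (_ : n%:R - 2 = m.+1%:R) ?pnatr_eq0 //; ring.
pose u : 'rV[R]_n := \row_j (if j == o0 then n%:R - 1 else -1).
have ustd : in_std u.
  rewrite /in_std; under eq_bigr do rewrite mxE.
  by rewrite sum_if1; ring.
have [w wW fw] := (fsurj u).1 ustd.
have wL : w \in L := subvP WL _ wW.
have fix0 : forall s : 'S_n, s o0 = o0 -> Defs.act s w = w.
  move=> s s0; apply/eqP; rewrite -subr_eq0; apply/eqP; apply: finj.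
    by rewrite memvB // Winv.
  rewrite linearB /= feqv // fw; apply/eqP; rewrite subr_eq0; apply/eqP.
  apply/matrixP=> x y; rewrite actstdE !mxE.
  by rewrite -(inj_eq (@perm_inj _ s)) permKV s0.
have winv : forall s : 'S_n, s o0 = o0 -> forall i j, w (s i) (s j) = w i j.
  move=> s s0 i j; have si : (s^-1)%g o0 = o0 by rewrite -{1}s0 permK.
  by rewrite -{2}(fix0 _ si) actE invgK.
have fx : forall x y, x != o0 -> y != o0 -> tperm x y o0 = o0.
  by move=> x y hx hy; rewrite tpermD // eq_sym.
have wt : forall x y, x != o0 -> y != o0 -> forall i j,
    w (tperm x y i) (tperm x y j) = w i j.
  by move=> x y hx hy; apply: winv; apply: fx.
pose a := w o0 o0; pose b := w o1 o1; pose c := w o0 o1; pose d := w o1 o0;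
pose e := w o1 o2.
have wF : forall i j, w i j = if i == o0 then (if j == o0 then a else c)
     else if j == o0 then d else if i == j then b else e.
  move=> i j.
  case: (eqVneq i o0) => [->|i0]; case: (eqVneq j o0) => [->|j0] //=.
  - by rewrite /c -(wt o1 j h10 j0 o0 o1) (fx _ _ h10 j0) tpermL.
  - by rewrite /d -(wt o1 i h10 i0 o1 o0) (fx _ _ h10 i0) tpermL.
  case: (eqVneq i j) => [<-|ij].
    by rewrite /b -(wt o1 i h10 i0 o1 o1) tpermL.
  case: (eqVneq j o1) => [j1|j1].
    rewrite j1 in ij *.
    have E1 := wt o1 o2 h10 h20 o1 o2; rewrite tpermL tpermR in E1.
    have E2 := wt o2 i h20 i0 o2 o1; rewrite tpermL (tpermD h21 ij) in E2.
    by rewrite E2 E1.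
  have E3 := wt o1 i h10 i0 o1 j.
  rewrite tpermL (tpermD _ ij) 1?eq_sym // in E3.
  have E4 := wt o2 j h20 j0 o1 o2.
  rewrite tpermL (tpermD _ j1) 1?eq_sym // in E4.
  by rewrite E3 E4.
have rs : forall i, \sum_l w i l = 0.
  move=> i; have H := congr1 (fun M : 'cV[R]_n => M i ord0) (hLn w wL : w *m ones R n = 0).
  rewrite /= !mxE in H; rewrite -[RHS]H; apply: eq_bigr => l _.
  by rewrite /ones mxE mulr1.
have ea : a = - (c * (n%:R - 1)).
  apply: (addIr (c * (n%:R - 1))); rewrite addNr -(rs o0) -(sum_if1 o0).
  by apply: eq_bigr => l _; rewrite wF eqxx.
have r1 : d + b + e * (n%:R - 2) = 0.
  rewrite -(rs o1) -(@sum_if2 o0 o1) //.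
  apply: eq_bigr => l _; rewrite wF (negbTE h10) (eq_sym o1 l).
  done.
have Vz : \sum_(k < n) Defs.act (tperm o0 k) w = 0.
  apply: finj; first by apply: memv_suml => k _; apply: Winv.
  rewrite linear_sum /=.
  under eq_bigr do rewrite feqv // fw.
  apply/matrixP=> x y; rewrite summxE mxE.
  under eq_bigr do rewrite actstdE tpermV mxE tperm0 eq_sym.
  by rewrite sum_if1; ring.
have tr : a + b * (n%:R - 1) = 0.
  have H := congr1 (fun M : 'M[R]_n => M o0 o0) Vz; rewrite /= summxE mxE in H.
  rewrite -H -(sum_if1 o0); apply: eq_bigr => k _.
  rewrite actE tpermV tpermL wF eqxx.
  by case: (k == o0).
case: (eqVneq c d) => cd; last first.
  pose Mm := Jmx R n *m w + w *m Jmx R n + 2%:R *: w.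
  have MmL : Mm \in L by rewrite memvD ?memvZ ?jor.
  have cs : forall q, \sum_l w l q = if q == o0 then (d - c) * (n%:R - 1) else c - d.
    move=> q; case: (eqVneq q o0) => [->|q0].
      rewrite (eq_bigr (fun l => if l == o0 then a else d)); last first.
        by move=> l _; rewrite wF eqxx.
      by rewrite sum_if1 ea; ring.
    rewrite (eq_bigr (fun l => if l == o0 then c else if l == q then b else e)).
      rewrite sum_if2 1?eq_sym //.
      by apply/eqP; rewrite -subr_eq0; apply/eqP; rewrite -[RHS]r1; ring.
    by move=> l _; rewrite wF (negbTE q0).
  have MmE : forall p q, Mm p q = n%:R^-1 * (if q == o0 then (d - c) * (n%:R - 1) else c - d).
    move=> p q.
    have S1 : \sum_l Jmx R n p l * w l q = n%:R^-1 * \sum_l w l q - w p q.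
      rewrite mulr_sumr -(sum_ind p (fun l => w l q)) -sumrB.
      by apply: eq_bigr => l _; rewrite mxE eq_sym; ring.
    have S2 : \sum_l w p l * Jmx R n l q = - w p q.
      transitivity (n%:R^-1 * \sum_l w p l - \sum_l (l == q)%:R * w p l).
        rewrite mulr_sumr -sumrB.
        by apply: eq_bigr => l _; rewrite mxE; ring.
      by rewrite rs sum_ind; ring.
    rewrite /Mm !mxE S1 S2 cs; ring.
  have RL : forall k, Rmx R k \in L.
    move=> k.
    have -> : Rmx R k = (d - c)^-1 *: Defs.act (tperm o0 k) Mm + Jmx R n.
      apply/matrixP=> x y.
      rewrite RmxE 2![in RHS]mxE actE tpermV MmE tperm0 !mxE.
      have dc0 : d - c != 0 by rewrite subr_eq0 eq_sym.
      by case: (y == k); rewrite ?natrT ?natrF; field; rewrite n0' dc0.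
    by rewrite memvD // memvZ // inv.
  by left; apply/span_subvP => X /mapP [k _ ->]; apply: RL.
have eb : b = c.
  apply: (mulIf n1); apply: (addrI a); rewrite tr {1}ea; ring.
have ee : e = - (2%:R * c) / (n%:R - 2).
  apply: (mulIf n2); rewrite divfK //.
  apply: (addrI (d + b)); rewrite r1 eb -cd; ring.
have c0 : c != 0.
  apply/eqP => c0.
  have w0 : w = 0.
    apply/matrixP => i j; rewrite mxE wF ea eb ee -cd c0.
    by case: (i == o0); case: (j == o0); case: (i == j); rewrite /=; ring.
  have H := congr1 (fun M : 'rV[R]_n => M 0 o0) fw.
  by move: H; rewrite w0 linear0 /= !mxE eqxx => /eqP; rewrite eq_sym (negbTE n1).
have S0L : Smat o0 \in L.
  have -> : Smat o0 = ((n%:R - 2) / (n%:R * c)) *: w + 2%:R *: Jmx R n.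
    apply/matrixP => i j; rewrite /Smat !mxE wF ea eb ee -cd.
    case: (eqVneq i o0) => [->|i0].
      case: (eqVneq j o0) => [_|j0]; rewrite ?eqxx /= ?natrT ?natrF.
        by field; rewrite n0' c0.
      by field; rewrite n0' c0.
    case: (eqVneq j o0) => [->|j0]; rewrite ?eqxx ?(negbTE i0) /= ?natrT ?natrF.
      by field; rewrite n0' c0.
    case: (eqVneq i j) => [_|ij]; rewrite ?eqxx /= ?natrT ?natrF.
      by field; rewrite n0' c0.
    by field; rewrite n0' n2' c0.
  by rewrite memvD // memvZ.
have SL : forall k, Smat k \in L by move=> k; rewrite -(SmatE o0 k) inv.
right; apply/span_subvP => X /mapP [[p q]]; rewrite mem_filter /= => /andP [pq _] ->.
have -> : Lmx R p q + Lmx R q p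
    = (- n%:R^-1) *: (Smat p *m Smat q + Smat q *m Smat p + Smat p + Smat q).
  rewrite Sjor // LmxE // LmxE 1?eq_sym //.
  by apply/matrixP=> x y; rewrite !mxE; field; rewrite n0'.
by apply: memvZ; apply: memvD; [apply: memvD; [apply: jor|]|]; apply: SL.
Qed.

End Proof.

Theorem mainTheorem14 (R : realType) (n : nat) (L : {vspace 'M[R]_n}) :
  (2 < n)%N ->
  (forall Q, Q \in L -> inLn Q) ->
  jordan L ->
  Sn_invariant L ->
  Jmx R n \in L ->
  (exists W : {vspace 'M[R]_n}, (W <= L)%VS /\ iso_std W) ->
  let c1 := (EI R n <= L)%VS /\ ~ (Symm R n <= L)%VS in
  let c2 := (Symm R n <= L)%VS /\ ~ (EI R n <= L)%VS in
  let c3 := (EI R n + Symm R n <= L)%VS in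
  [/\ c1 \/ c2 \/ c3, ~ (c1 /\ c2), ~ (c1 /\ c3) & ~ (c2 /\ c3)].
Proof.
case: n L => [|[|[|m]]] // L _ hLn jor inv hJ
  [W [WL [Winv [f [finj fsurj feqv]]]]] c1 c2 c3.
have K := key hLn jor inv hJ WL Winv finj fsurj feqv.
rewrite {}/c1 {}/c2 {}/c3 subv_add.
move: K; case: (EI R _ <= L)%VS; case: (Symm R _ <= L)%VS => /= K;
  split; move: K; rewrite /is_true; intuition congruence.
Qed.
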